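(* Let $\phi$ be a flow of a compact metric space $X$. Suppose that for every $\epsilon>0$ there is $\delta>0$ such that $B[x,\delta\,dist(x,Sing(\phi))]\subset\phi_{[-\epsilon,\epsilon]}(x)$ for every $x\in X$. Then $\phi$ is both singular-expansive and singular-equicontinuous.
   Context: A flow is a continuous $\phi:\mathbb{R}\times X\to X$ with $\phi_0=\mathrm{id}$, $\phi_{t+s}=\phi_t\circ\phi_s$; $\phi_I(x)=\{\phi_t(x):t\in I\}$; $Sing(\phi)$ is the set of fixed points; $dist(z,A)=\inf_{a\in A}d(z,a)$, with $dist(z,\emptyset)=diam(X)$; $B[x,r]=\{y:d(x,y)\le r\}$. $\phi$ is singular-expansive if for every $\epsilon>0$ there is $\delta>0$ such that whenever $x,y\in X$ and an increasing homeomorphism $s:\mathbb{R}\to\mathbb{R}$ satisfy $d(\phi_t(x),\phi_{s(t)}(y))\le\delta\,dist(\phi_t(x),Sing(\phi))$ for all $t$, then $\phi_{s(t_0)}(y)\in\phi_{[t_0-\epsilon,t_0+\epsilon]}(x)$ for some $t_0\in\mathbb{R}$. $\phi$ is singular-equicontinuous if for every $\epsilon>0$ there is $\delta>0$ such that $x,y\in X$ and $d(x,y)\le\delta\,dist(x,Sing(\phi))$ imply $d(\phi_t(x),\phi_t(y))\le\epsilon$ for all $t\in\mathbb{R}$. *)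

(* Defs.v *)
From HB Require Import structures.
From mathcomp Require Import all_boot all_order all_algebra.
From mathcomp Require Import all_classical all_reals all_analysis.
Set Implicit Arguments. Unset Strict Implicit. Unset Printing Implicit Defensive.
Import Order.TTheory GRing.Theory Num.Theory.
Import numFieldNormedType.Exports.
Local Open Scope classical_set_scope.
Local Open Scope ring_scope.

Section Defs.
Variables (R : realType) (X : Type) (d : X -> X -> R).

Definition is_metric : Prop :=
  [/\ (forall x y, 0 <= d x y),
      (forall x y, d x y = 0 <-> x = y),
      (forall x y, d x y = d y x) &
      (forall x y z, d x z <= d x y + d y z)].

Definition d_open (U : set X) : Prop :=
  forall x, U x -> exists2 r : R, 0 < r & forall y, d x y < r -> U y.

Definition d_compact : Prop :=
  forall (I : Type) (U : I -> set X),
    (forall i, d_open (U i)) -> (forall x, exists i, U i x) ->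
    exists (n : nat) (f : 'I_n -> I), forall x, exists k, U (f k) x.

Definition flow_continuous (phi : R -> X -> X) : Prop :=
  forall (t : R) (x : X) (e : R), 0 < e ->
    exists2 r : R, 0 < r & forall s y, `|s - t| < r -> d x y < r ->
      d (phi s y) (phi t x) < e.

Definition is_flow (phi : R -> X -> X) : Prop :=
  [/\ flow_continuous phi,
      (forall x, phi 0 x = x) &
      (forall t s x, phi (t + s) x = phi t (phi s x))].

Definition orbit_seg (phi : R -> X -> X) (I : set R) (x : X) : set X :=
  [set phi t x | t in I].

Definition Sing (phi : R -> X -> X) : set X := [set x | forall t, phi t x = x].

Definition cball (x : X) (r : R) : set X := [set y | d x y <= r].

Definition diam : R := sup [set r | exists x y, r = d x y].

(* dist(z,A) = inf_{a in A} d(z,a), and dist(z,emptyset) = diam X *)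
Definition dist (z : X) (A : set X) : R :=
  if pselect (exists a, A a) then inf [set d z a | a in A] else diam.

Definition incr_homeo (s : R -> R) : Prop :=
  [/\ (forall a b, a < b -> s a < s b), continuous s & (forall r, exists t, s t = r)].

Definition singular_expansive (phi : R -> X -> X) : Prop :=
  forall e : R, 0 < e -> exists2 del : R, 0 < del &
    forall (x y : X) (s : R -> R), incr_homeo s ->
      (forall t, d (phi t x) (phi (s t) y) <= del * dist (phi t x) (Sing phi)) ->
      exists t0 : R, orbit_seg phi `[t0 - e, t0 + e] x (phi (s t0) y).

Definition singular_equicontinuous (phi : R -> X -> X) : Prop :=
  forall e : R, 0 < e -> exists2 del : R, 0 < del &
    forall x y : X, d x y <= del * dist x (Sing phi) ->
      forall t, d (phi t x) (phi t y) <= e.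

End Defs.

(* Main.v *)
Require Import Defs.
From mathcomp Require Import all_boot all_order all_algebra.
From mathcomp Require Import all_classical all_reals all_analysis.
Import Order.TTheory GRing.Theory Num.Theory.
Local Open Scope classical_set_scope.
Local Open Scope ring_scope.

Lemma fin_min (R : realType) n (g : 'I_n -> R) :
  (forall k, 0 < g k) -> exists2 r : R, 0 < r & forall k, r <= g k.
Proof.
elim: n g => [|n IH] g gp.
  by exists 1 => // -[].
have [r rp rg] := IH (fun k => g (lift ord0 k)) (fun k => gp _).
exists (Num.min r (g ord0)); first by rewrite lt_min rp gp.
move=> k; case: (unliftP ord0 k) => [j ->|->].
  by rewrite ge_min rg.
by rewrite ge_min lexx orbT.
Qed.

Lemma unif_time (R : realType) (X : Type) (d : X -> X -> R)
  (phi : R -> X -> X) :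
  is_metric d -> d_compact d -> is_flow d phi ->
  forall e : R, 0 < e -> exists2 r : R, 0 < r &
    forall z u, `|u| < r -> d z (phi u z) < e.
Proof.
move=> [d0 dE dC dT] Hc [Hcont H0 _] e ep.
have e2 : 0 < e / 2 by rewrite divr_gt0.
pose P (p : X * R) := 0 < p.2 /\ forall s y, `|s - 0| < p.2 -> d p.1 y < p.2 ->
      d (phi s y) (phi 0 p.1) < e / 2.
pose I := {p : X * R | P p}.
pose U (i : I) : set X := [set y | d (sval i).1 y < (sval i).2].
have Uo : forall i, d_open d (U i).
  move=> i x Ux; exists ((sval i).2 - d (sval i).1 x); first by rewrite subr_gt0.
  move=> y hy; rewrite /U /=.
  apply: (le_lt_trans (dT _ x _)).
  by rewrite -ltrBrDl.
have Uc : forall x, exists i, U i x.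
  move=> x; have [r rp Hr] := Hcont 0 x (e / 2) e2.
  have Pp : P (x, r) by split.
  exists (exist P (x, r) Pp); rewrite /U /=.
  by have := proj2 (dE x x) erefl => ->.
have [n [f Hf]] := Hc I U Uo Uc.
have [r rp rg] := @fin_min _ _ (fun k => (sval (f k)).2) (fun k => (proj1 (svalP (f k)))).
exists r => // z u hu.
have [k Uk] := Hf z.
move: Uk; rewrite /U /=.
case: (f k) (rg k) => -[z0 r0] [/= r0p Hp] /= rk hz.
have h1 := Hp u z; have h2 := Hp 0 z.
rewrite H0 in h1 h2.
rewrite subr0 normr0 in h2.
have a := h2 r0p hz.
rewrite H0 in a.
rewrite subr0 in h1.
have b := h1 (lt_le_trans hu rk) hz.
apply: (le_lt_trans (dT _ z0 _)).
by rewrite (splitr e) ltrD // dC.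
Qed.

Theorem mainTheorem17 (R : realType) (X : Type) (d : X -> X -> R)
  (phi : R -> X -> X) :
  is_metric d -> d_compact d -> is_flow d phi ->
  (forall e : R, 0 < e -> exists2 del : R, 0 < del &
     forall x : X,
       cball d x (del * dist d x (Sing phi)) `<=` orbit_seg phi `[- e, e] x) ->
  singular_expansive d phi /\ singular_equicontinuous d phi.
Proof.
move=> Hm Hc Hf H; split.
  move=> e ep; have [del dp Hd] := H e ep.
  exists del => // x y s _ Ht; exists 0.
  rewrite sub0r add0r.
  apply: Hd; rewrite /cball /=.
  by have := Ht 0; case: Hf => _ -> _.
move=> e ep.
have [r rp Hr] := @unif_time _ _ _ _ Hm Hc Hf _ ep.
have r2 : 0 < r / 2 by rewrite divr_gt0.
have [del dp Hd] := H _ r2.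
exists del => // x y hxy t.
have [u hu <-] := Hd x y hxy.
have hu' : `|u| < r.
  move: hu; rewrite /mkset in_itv => /andP[h1 h2].
  have h1' : - (r / 2) <= u := h1.
  have h2' : u <= r / 2 := h2.
  apply: (le_lt_trans (y := r / 2)); first by rewrite ler_norml h1' h2'.
  by rewrite ltr_pdivrMr // ltr_pMr // ltr1n.
case: Hf => _ _ Hadd.
rewrite -Hadd addrC Hadd.
exact: ltW (Hr _ _ hu').
Qed.
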